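(* For any $L,L'\in\mathcal{L}$ and any $\gamma$-point, the 1-form $\operatorname{tr}(L\,dL')$ has at most a simple pole at $\gamma$, and $\operatorname{res}_\gamma\operatorname{tr}(L\,dL')=2(\kappa_1+\kappa_2)([L,L'])$.
   Context: $\mathfrak{g}=G_2$ is realized as $7\times7$ matrices $\begin{pmatrix} 0 & -\sqrt{2}a_2^t & -\sqrt{2}a_1^t \\ \sqrt{2}a_1 & A & [a_2] \\ \sqrt{2}a_2 & [a_1] & -A^t \end{pmatrix}$ ($a_i\in\mathbb{C}^3$, $A$ traceless $3\times3$, $[x]$ the skew-symmetric matrix with $[x]y=x\times y$). $\mathcal{L}$ is the Lie algebra (pointwise commutator) of $\mathfrak{g}$-valued meromorphic functions on a Riemann surface with marked points $P_i,Q_j,\gamma_s$, holomorphic outside them, such that at each $\gamma$ (with fixed $\alpha_1,\alpha_2\in\mathbb{C}^3$, $\alpha_1^t\alpha_2=0$, and local coordinate $z$) $L=L_{-2}z^{-2}+L_{-1}z^{-1}+L_0+L_1z+\ldots$ with $L_{-2}=\mu\,\mathrm{diag}(0,\alpha_1\alpha_2^t,-\alpha_2\alpha_1^t)$; $L_{-1}=\begin{pmatrix} 0 & -\sqrt{2}\beta_{02}\alpha_2^t & -\sqrt{2}\beta_{01}\alpha_1^t \\ \sqrt{2}\beta_{01}\alpha_1 & \alpha_1\beta_2^t-\beta_1\alpha_2^t & \beta_{02}[\alpha_2] \\ \sqrt{2}\beta_{02}\alpha_2 & \beta_{01}[\alpha_1] & \alpha_2\beta_1^t-\beta_2\alpha_1^t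 \end{pmatrix}$ with $\alpha_1^t\beta_2=\alpha_2^t\beta_1=0$; $L_0$ with entries $a_1,a_2,A$ satisfying $\alpha_1^ta_2=\alpha_2^ta_1=0$, $A\alpha_1=\kappa_1\alpha_1$, $-A^t\alpha_2=\kappa_2\alpha_2$; and the $(2,2)$ block $B$ of $L_1$ satisfying $\alpha_2^tB\alpha_1=0$. For $L\in\mathcal{L}$, $\kappa_1(L),\kappa_2(L)$ denote these eigenvalues $\kappa_1,\kappa_2$ of $L_0$ at $\gamma$, and $(\kappa_1+\kappa_2)(L)=\kappa_1(L)+\kappa_2(L)$. *)

(* Defs.v *)
From mathcomp Require Import all_boot all_order all_algebra.
Set Implicit Arguments. Unset Strict Implicit. Unset Printing Implicit Defensive.
Import Order.TTheory GRing.Theory Num.Theory.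
Local Open Scope ring_scope.

Section G2Defs.
Variable R : numClosedFieldType.

Definition sq2 : R := sqrtC 2.

Definition i0 : 'I_3 := @Ordinal 3 0 isT.
Definition i1 : 'I_3 := @Ordinal 3 1 isT.
Definition i2 : 'I_3 := @Ordinal 3 2 isT.

Definition skew (x : 'cV[R]_3) : 'M[R]_3 :=
  let x1 := x i0 0 in let x2 := x i1 0 in let x3 := x i2 0 in
  \matrix_(i < 3, j < 3)
    nth 0 (nth [::] [:: [:: 0; - x3; x2]; [:: x3; 0; - x1]; [:: - x2; x1; 0]] i) j.

Definition M7 := 'M[R]_(1 + (3 + 3)).

Definition G2mat (a1 a2 : 'cV[R]_3) (A : 'M[R]_3) : M7 :=
  block_mx (0 : 'M_1) (row_mx (- sq2 *: a2^T) (- sq2 *: a1^T))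
           (col_mx (sq2 *: a1) (sq2 *: a2))
           (block_mx A (skew a2) (skew a1) (- A^T)).

Definition inG2 (M : M7) : Prop :=
  exists a1 a2 A, \tr A = 0 /\ M = G2mat a1 a2 A.

Definition blk22 (M : M7) : 'M[R]_3 := ulsubmx (drsubmx M).

(* A local Laurent expansion at gamma is encoded by c : nat -> M7,
   with c n the coefficient of z^(n-2)  (so c 0 = L_{-2}, c 1 = L_{-1},
   c 2 = L_0, c 3 = L_1, ...). *)
Definition in_L_at_gamma (alpha1 alpha2 : 'cV[R]_3) (c : nat -> M7) : Prop :=
  (forall n, inG2 (c n)) /\
  (exists mu : R,
     c 0%N = mu *: block_mx (0 : 'M_1) 0 0
               (block_mx (alpha1 *m alpha2^T) 0 0 (- (alpha2 *m alpha1^T)))) /\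
  (exists (b01 b02 : R) (b1 b2 : 'cV[R]_3),
     alpha1^T *m b2 = 0 /\ alpha2^T *m b1 = 0 /\
     c 1%N = G2mat (b01 *: alpha1) (b02 *: alpha2)
                   (alpha1 *m b2^T - b1 *m alpha2^T)) /\
  (exists (a1 a2 : 'cV[R]_3) (A : 'M[R]_3) (k1 k2 : R),
     alpha1^T *m a2 = 0 /\ alpha2^T *m a1 = 0 /\
     A *m alpha1 = k1 *: alpha1 /\ - A^T *m alpha2 = k2 *: alpha2 /\
     c 2%N = G2mat a1 a2 A) /\
  alpha2^T *m blk22 (c 3%N) *m alpha1 = 0.

(* coefficient of z^(k-5) in tr(L dL'/dz) :  sum_{i+j=k} (j-2) tr(L_{i-2} L'_{j-2}) *)
Definition trdcoef (c c' : nat -> M7) (k : nat) : R :=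
  \sum_(i < k.+1) (((k - i)%N)%:R - 2) * \tr (c i *m c' (k - i)%N).

(* coefficient of z^(k-4) of the pointwise commutator [L, L'] *)
Definition commcoef (c c' : nat -> M7) (k : nat) : M7 :=
  \sum_(i < k.+1) (c i *m c' (k - i)%N - c' (k - i)%N *m c i).

End G2Defs.

(* Main.v *)
Require Import Defs.
From mathcomp Require Import all_boot all_order all_algebra.
From mathcomp Require Import ring.
Import GRing.Theory Num.Theory.
Local Open Scope ring_scope.

Local Notation sk := (@Defs.skew _).
Section H.
Variable R : numClosedFieldType.
Implicit Types u v w a b c x y : 'cV[R]_3.

Definition dot u v : R := (u^T *m v) 0 0.

Lemma sum3 (F : 'I_3 -> R) : \sum_i F i = F (i0) + F (i1) + F (i2).
Proof.
rewrite !big_ord_recl big_ord0 addr0 addrA.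
by congr (F _ + F _ + F _); apply: val_inj.
Qed.

Lemma ord0_1 : (ord0 : 'I_1) = 0. Proof. by apply: val_inj. Qed.


Ltac crd := rewrite /dot ?/Defs.skew; repeat (first [rewrite !mxE | rewrite !sum3 | rewrite !big_ord1]); rewrite /= ?ord0_1.

Lemma dotC u v : dot u v = dot v u.
Proof. crd; ring. Qed.

Lemma ord3P (P : 'I_3 -> Prop) : P i0 -> P i1 -> P i2 -> forall i, P i.
Proof.
move=> H0 H1 H2 [[|[|[|k]]] Hk] //.
- by have -> : Ordinal Hk = i0 by apply: val_inj.
- by have -> : Ordinal Hk = i1 by apply: val_inj.
- by have -> : Ordinal Hk = i2 by apply: val_inj.
Qed.


Ltac vecext := let i := fresh "i" in let j := fresh "j" in apply/matrixP => i j; rewrite [j]ord1; elim/ord3P: i.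
Ltac mx3ext := let i := fresh "i" in let j := fresh "j" in apply/matrixP => i j; elim/ord3P: i; elim/ord3P: j.
Ltac vext := let i := fresh "i" in let j := fresh "j" in
  apply/matrixP => i j; rewrite [j]ord1; elim/ord3P: i.

Lemma skew_sk a b c :
  sk a *m (sk b *m c) = dot a c *: b - dot a b *: c.
Proof. vecext; crd; ring. Qed.

Lemma tr_sk a b : \tr (sk a *m sk b) = -2 * dot a b.
Proof. rewrite /mxtrace; crd; ring. Qed.

Lemma skewT a : (sk a)^T = - sk a.
Proof. apply/matrixP => i j; elim/ord3P: i; elim/ord3P: j; crd; ring. Qed.

Lemma skew0 : sk (0 : 'cV[R]_3) = 0.
Proof. apply/matrixP => i j; elim/ord3P: i; elim/ord3P: j; crd; ring. Qed.

Lemma outer_mul u v w : u *m v^T *m w = dot v w *: u.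
Proof. vecext; crd; ring. Qed.

Lemma tr_outer (M : 'M[R]_3) u v : \tr (M *m (u *m v^T)) = dot v (M *m u).
Proof. rewrite /mxtrace; crd; ring. Qed.

Lemma dot_mx (M : 'M[R]_3) u v : dot u (M *m v) = dot (M^T *m u) v.
Proof. crd; ring. Qed.

Lemma dotZl k u v : dot (k *: u) v = k * dot u v.
Proof. crd; ring. Qed.
Lemma dotZr k u v : dot u (k *: v) = k * dot u v.
Proof. crd; ring. Qed.
Lemma dot0l u : dot 0 u = 0.
Proof. crd; ring. Qed.
Lemma dot0r u : dot u 0 = 0.
Proof. crd; ring. Qed.

Lemma dot_of u v : u^T *m v = 0 -> dot u v = 0.
Proof. by move=> H; rewrite /dot H mxE. Qed.


Lemma sq2sq : sq2 R * sq2 R = 2.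
Proof. by rewrite /sq2 -expr2 sqrtCK. Qed.


Lemma trblk n1 n2 (Aul : 'M[R]_n1) (Aur : 'M[R]_(n1,n2)) Adl (Adr : 'M[R]_n2) :
  \tr (block_mx Aul Aur Adl Adr) = \tr Aul + \tr Adr.
Proof. exact: mxtrace_block. Qed.

Lemma trG2_aux x1 x2 (A : 'M[R]_3) y1 y2 B :
  \tr (G2mat x1 x2 A *m G2mat y1 y2 B) =
  - (2 * (sq2 R * sq2 R) + 2) * (dot x1 y2 + dot x2 y1) + \tr (A *m B) + \tr (A^T *m B^T).
Proof.
rewrite /G2mat mulmx_block mul_row_col mul_col_row mulmx_block add_block_mx !trblk.
rewrite /mxtrace; crd. ring.
Qed.

Lemma trG2 x1 x2 (A : 'M[R]_3) y1 y2 B :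
  \tr (G2mat x1 x2 A *m G2mat y1 y2 B) =
  -6 * (dot x1 y2 + dot x2 y1) + 2 * \tr (A *m B).
Proof.
rewrite trG2_aux sq2sq -trmx_mul mxtrace_tr (mxtrace_mulC B A); ring.
Qed.

Lemma blk22G2_aux x1 x2 (A : 'M[R]_3) y1 y2 B :
  blk22 (G2mat x1 x2 A *m G2mat y1 y2 B) =
  - (sq2 R * sq2 R) *: (x1 *m y2^T) + A *m B + sk x2 *m sk y1.
Proof.
rewrite /blk22 /G2mat mulmx_block mul_col_row mulmx_block add_block_mx block_mxKdr block_mxKul.
mx3ext; crd; ring.
Qed.

Lemma blk22G2 x1 x2 (A : 'M[R]_3) y1 y2 B :
  blk22 (G2mat x1 x2 A *m G2mat y1 y2 B) =
  - 2 *: (x1 *m y2^T) + A *m B + sk x2 *m sk y1.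
Proof. by rewrite blk22G2_aux sq2sq. Qed.

Lemma blk22_G2 x1 x2 (A : 'M[R]_3) : blk22 (G2mat x1 x2 A) = A.
Proof. by rewrite /blk22 /G2mat block_mxKdr block_mxKul. Qed.


Definition comm22 (X Y : M7 R) := blk22 (X *m Y) - blk22 (Y *m X).

Lemma comm22C X Y : comm22 Y X = - comm22 X Y.
Proof. by rewrite /comm22 opprB. Qed.


Lemma L04a mu al1 al2 y1 y2 (B : 'M[R]_3) :
  comm22 (G2mat 0 0 (mu *: (al1 *m al2^T))) (G2mat y1 y2 B) *m al1 =
  (mu * dot al2 (B *m al1)) *: al1 - (mu * dot al2 al1) *: (B *m al1).
Proof. rewrite /comm22 !blk22G2; vext; crd; ring. Qed.

Lemma L04b mu al1 al2 y1 y2 (B : 'M[R]_3) :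
  - (comm22 (G2mat 0 0 (mu *: (al1 *m al2^T))) (G2mat y1 y2 B))^T *m al2 =
  (mu * dot al2 (B *m al1)) *: al2 - (mu * dot al1 al2) *: (B^T *m al2).
Proof. rewrite /comm22 !blk22G2; vext; crd; ring. Qed.

End H.

Arguments dot {R}.
Arguments comm22 {R}.

Ltac crd := rewrite /dot ?/Defs.skew; repeat (first [rewrite !mxE | rewrite !sum3 | rewrite !big_ord1]); rewrite /= ?ord0_1.
Ltac vecext := let i := fresh "i" in let j := fresh "j" in apply/matrixP => i j; rewrite [j]ord1; elim/ord3P: i.
Ltac mx3ext := let i := fresh "i" in let j := fresh "j" in apply/matrixP => i j; elim/ord3P: i; elim/ord3P: j.
Ltac vext := let i := fresh "i" in let j := fresh "j" in
  apply/matrixP => i j; rewrite [j]ord1; elim/ord3P: i.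
Ltac trc := rewrite trG2 /mxtrace; crd; ring.

Section H2.
Variable R : numClosedFieldType.
Implicit Types u v w a b c x y al p : 'cV[R]_3.


Lemma L13a al1 al2 b01 b02 b1 b2 p1 p2 (P : 'M[R]_3) :
  comm22 (G2mat (b01 *: al1) (b02 *: al2) (al1 *m b2^T - b1 *m al2^T)) (G2mat p1 p2 P) *m al1 =
  (-2 * b01 * dot p2 al1 + dot b2 (P *m al1) - b02 * dot al2 p1) *: al1
  + (3 * b02 * dot al2 al1) *: p1 - dot al2 (P *m al1) *: b1
  - dot b2 al1 *: (P *m al1) + dot al2 al1 *: (P *m b1).
Proof. rewrite /comm22 !blk22G2; vext; crd; ring. Qed.

Lemma L13b al1 al2 b01 b02 b1 b2 p1 p2 (P : 'M[R]_3) :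
  - (comm22 (G2mat (b01 *: al1) (b02 *: al2) (al1 *m b2^T - b1 *m al2^T)) (G2mat p1 p2 P))^T *m al2 =
  (-2 * b02 * dot al2 p1 - dot b1 (P^T *m al2) - b01 * dot p2 al1) *: al2
  + (3 * b01 * dot al1 al2) *: p2 - dot al1 al2 *: (P^T *m b2)
  + dot b1 al2 *: (P^T *m al2) + dot al2 (P *m al1) *: b2.
Proof. rewrite /comm22 !blk22G2; vext; crd; ring. Qed.

Lemma L22a al1 a1 a2 (A : 'M[R]_3) k1 a1' a2' (A' : 'M[R]_3) k1' :
  comm22 (G2mat a1 a2 A) (G2mat a1' a2' A') *m al1 =
  (dot a2' a1 - dot a2 a1') *: al1 - (3 * dot a2' al1) *: a1 + (3 * dot a2 al1) *: a1'
  + A *m (A' *m al1 - k1' *: al1) - A' *m (A *m al1 - k1 *: al1)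
  + k1' *: (A *m al1 - k1 *: al1) - k1 *: (A' *m al1 - k1' *: al1).
Proof. rewrite /comm22 !blk22G2; vext; crd; ring. Qed.

Lemma L22b al2 a1 a2 (A : 'M[R]_3) k2 a1' a2' (A' : 'M[R]_3) k2' :
  - (comm22 (G2mat a1 a2 A) (G2mat a1' a2' A'))^T *m al2 =
  (dot a2 a1' - dot a2' a1) *: al2 + (3 * dot a1 al2) *: a2' - (3 * dot a1' al2) *: a2
  - A^T *m (- A'^T *m al2 - k2' *: al2) + A'^T *m (- A^T *m al2 - k2 *: al2)
  + k2' *: (- A^T *m al2 - k2 *: al2) - k2 *: (- A'^T *m al2 - k2' *: al2).
Proof. rewrite /comm22 !blk22G2; vext; crd; ring. Qed.

End H2.

Section H3.
Variable R : numClosedFieldType.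
Implicit Types u v w a b c x y al p : 'cV[R]_3.


Lemma T00 mu (al1 al2 y1 y2 : 'cV[R]_3) (B : 'M[R]_3) :
  \tr (G2mat 0 0 (mu *: (al1 *m al2^T)) *m G2mat y1 y2 B) = 2 * mu * dot al2 (B *m al1).
Proof. trc. Qed.

Lemma T00' mu (al1 al2 y1 y2 : 'cV[R]_3) (B : 'M[R]_3) :
  \tr (G2mat y1 y2 B *m G2mat 0 0 (mu *: (al1 *m al2^T))) = 2 * mu * dot al2 (B *m al1).
Proof. by rewrite mxtrace_mulC T00. Qed.

Lemma D0 mu (al1 al2 : 'cV[R]_3) :
  dot al2 ((mu *: (al1 *m al2^T)) *m al1) = mu * dot al2 al1 * dot al2 al1.
Proof. crd; ring. Qed.

Lemma D1 (al1 al2 b1 b2 : 'cV[R]_3) :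
  dot al2 ((al1 *m b2^T - b1 *m al2^T) *m al1) = dot al2 al1 * dot b2 al1 - dot al2 b1 * dot al2 al1.
Proof. crd; ring. Qed.

Lemma D2 (al1 al2 : 'cV[R]_3) (A : 'M[R]_3) k1 :
  dot al2 (A *m al1) = dot al2 (A *m al1 - k1 *: al1) + k1 * dot al2 al1.
Proof. crd; ring. Qed.

Lemma T11 (al1 al2 : 'cV[R]_3) b01 b02 b1 b2 b01' b02' b1' b2' :
  \tr (G2mat (b01 *: al1) (b02 *: al2) (al1 *m b2^T - b1 *m al2^T) *m
       G2mat (b01' *: al1) (b02' *: al2) (al1 *m b2'^T - b1' *m al2^T)) =
  -6 * (b01 * b02' * dot al1 al2 + b02 * b01' * dot al2 al1) +
  2 * (dot b2 al1 * dot b2' al1 - dot b2 b1' * dot al2 al1 - dot al2 al1 * dot b2' b1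
       + dot al2 b1' * dot al2 b1).
Proof. trc. Qed.

Lemma T21 (al1 al2 a1 a2 : 'cV[R]_3) (A : 'M[R]_3) k1 k2 b01' b02' b1' b2' :
  \tr (G2mat a1 a2 A *m
       G2mat (b01' *: al1) (b02' *: al2) (al1 *m b2'^T - b1' *m al2^T)) =
  -6 * (b02' * dot a1 al2 + b01' * dot a2 al1) +
  2 * (dot b2' (A *m al1 - k1 *: al1) + k1 * dot b2' al1
       + dot (- A^T *m al2 - k2 *: al2) b1' + k2 * dot al2 b1').
Proof. trc. Qed.

Lemma T13 (al1 al2 : 'cV[R]_3) b01 b02 b1 b2 p1 p2 (P : 'M[R]_3) :
  \tr (G2mat (b01 *: al1) (b02 *: al2) (al1 *m b2^T - b1 *m al2^T) *m G2mat p1 p2 P) =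
  -6 * (b01 * dot p2 al1 + b02 * dot al2 p1) + 2 * (dot b2 (P *m al1) - dot b1 (P^T *m al2)).
Proof. trc. Qed.

Lemma blk22D (X Y : M7 R) : blk22 (X + Y) = blk22 X + blk22 Y.
Proof. by apply/matrixP => i j; rewrite /blk22 !mxE. Qed.
Lemma blk22B (X Y : M7 R) : blk22 (X - Y) = blk22 X - blk22 Y.
Proof. by apply/matrixP => i j; rewrite /blk22 !mxE. Qed.

Lemma blk22N (X : M7 R) : blk22 (- X) = - blk22 X.
Proof. by apply/matrixP => i j; rewrite /blk22 !mxE. Qed.
Lemma blk0 : blk22 (0 : M7 R) = 0.
Proof. by apply/matrixP => i j; rewrite /blk22 !mxE. Qed.

Lemma blk22_comm (c c' : nat -> M7 R) :
  blk22 (commcoef c c' 4) = comm22 (c 0%N) (c' 4%N) + comm22 (c 1%N) (c' 3%N)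
   + comm22 (c 2%N) (c' 2%N) + comm22 (c 3%N) (c' 1%N) + comm22 (c 4%N) (c' 0%N).
Proof.
rewrite /commcoef !big_ord_recl big_ord0 /= !blk22D !blk22N /comm22 blk0 addr0 !addrA.
have e1 : bump 0 0 = 1%N by [].
have e2 : bump 0 1 = 2%N by [].
have e3 : bump 0 2 = 3%N by [].
have e4 : bump 0 3 = 4%N by [].
by rewrite e1 e2 e3 e4 /=.
Qed.

Lemma trd4 (c c' : nat -> M7 R) :
  trdcoef c c' 4 = 2 * \tr (c 0%N *m c' 4%N) + \tr (c 1%N *m c' 3%N) - \tr (c 3%N *m c' 1%N)
    - 2 * \tr (c 4%N *m c' 0%N).
Proof.
rewrite /trdcoef !big_ord_recl big_ord0 /=.
have e1 : bump 0 0 = 1%N by [].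
have e2 : bump 0 1 = 2%N by [].
have e3 : bump 0 2 = 3%N by [].
have e4 : bump 0 3 = 4%N by [].
rewrite e1 e2 e3 e4.
have -> : (4 - 0 = 4)%N by []. have -> : (4 - 1 = 3)%N by [].
have -> : (4 - 2 = 2)%N by []. have -> : (4 - 3 = 1)%N by []. have -> : (4 - 4 = 0)%N by [].
ring.
Qed.

End H3.

Section H4.
Variable R : numClosedFieldType.


Lemma c0form mu (al1 al2 : 'cV[R]_3) :
  mu *: block_mx (0 : 'M_1) 0 0 (block_mx (al1 *m al2^T) 0 0 (- (al2 *m al1^T)))
  = G2mat 0 0 (mu *: (al1 *m al2^T)).
Proof.
rewrite /G2mat skew0 !trmx0 !scaler0 row_mx0 col_mx0 !scale_block_mx !scaler0.
congr (block_mx _ _ _ (block_mx _ _ _ _)).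
mx3ext; crd; ring.
Qed.

Lemma distr5a (M1 M2 M3 M4 M5 : 'M[R]_3) (v : 'cV[R]_3) :
  (M1 + M2 + M3 + - M4 + - M5) *m v = M1 *m v + M2 *m v + M3 *m v - M4 *m v - M5 *m v.
Proof. by rewrite !mulmxDl !mulNmx. Qed.

Lemma distr5b (M1 M2 M3 M4 M5 : 'M[R]_3) (v : 'cV[R]_3) :
  - (M1 + M2 + M3 + - M4 + - M5)^T *m v =
  - M1^T *m v + - M2^T *m v + - M3^T *m v - (- M4^T *m v) - (- M5^T *m v).
Proof. vext; crd; ring. Qed.

Lemma dot_of3 (u v : 'cV[R]_3) (M : 'M[R]_3) : u^T *m M *m v = 0 -> dot u (M *m v) = 0.
Proof. by move=> H; rewrite /dot mulmxA H mxE. Qed.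

Lemma bumps : [/\ bump 0 0 = 1%N, bump 0 1 = 2%N, bump 0 2 = 3%N & bump 0 3 = 4%N].
Proof. by []. Qed.

Lemma trd0 (c c' : nat -> M7 R) : trdcoef c c' 0 = -2 * \tr (c 0%N *m c' 0%N).
Proof. rewrite /trdcoef !big_ord_recl big_ord0 /=. have -> : (0 - 0 = 0)%N by []. ring. Qed.

Lemma trd1 (c c' : nat -> M7 R) : trdcoef c c' 1 = - \tr (c 0%N *m c' 1%N) - 2 * \tr (c 1%N *m c' 0%N).
Proof.
rewrite /trdcoef !big_ord_recl big_ord0 /=. case: bumps => e1 e2 e3 e4. rewrite e1.
have -> : (1 - 0 = 1)%N by []. have -> : (1 - 1 = 0)%N by []. ring.
Qed.

Lemma trd2 (c c' : nat -> M7 R) : trdcoef c c' 2 = - \tr (c 1%N *m c' 1%N) - 2 * \tr (c 2%N *m c' 0%N).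
Proof.
rewrite /trdcoef !big_ord_recl big_ord0 /=. case: bumps => e1 e2 e3 e4. rewrite e1 e2.
have -> : (2 - 0 = 2)%N by []. have -> : (2 - 1 = 1)%N by []. have -> : (2 - 2 = 0)%N by []. ring.
Qed.

Lemma trd3 (c c' : nat -> M7 R) : trdcoef c c' 3 =
  \tr (c 0%N *m c' 3%N) - \tr (c 2%N *m c' 1%N) - 2 * \tr (c 3%N *m c' 0%N).
Proof.
rewrite /trdcoef !big_ord_recl big_ord0 /=. case: bumps => e1 e2 e3 e4. rewrite e1 e2 e3.
have -> : (3 - 0 = 3)%N by []. have -> : (3 - 1 = 2)%N by []. have -> : (3 - 2 = 1)%N by [].
have -> : (3 - 3 = 0)%N by []. ring.
Qed.

Lemma comb5 (x1 x2 x3 x4 x5 : R) (v : 'cV[R]_3) :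
  x1 *: v + x2 *: v + x3 *: v - x4 *: v - x5 *: v = (x1 + x2 + x3 - x4 - x5) *: v.
Proof. vext; crd; ring. Qed.

Lemma sum5_eq m (a1 a2 a3 a4 a5 b1 b2 b3 b4 b5 : 'cV[R]_m) :
  a1 = b1 -> a2 = b2 -> a3 = b3 -> a4 = b4 -> a5 = b5 ->
  a1 + a2 + a3 - a4 - a5 = b1 + b2 + b3 - b4 - b5.
Proof. by move=> -> -> -> -> ->. Qed.

End H4.
Arguments sum5_eq {R m a1 a2 a3 a4 a5 b1 b2 b3 b4 b5}.

Theorem lemma5p2 (R : numClosedFieldType) (alpha1 alpha2 : 'cV[R]_3)
  (Ha1 : alpha1 != 0) (Ha2 : alpha2 != 0)
  (Horth : alpha1^T *m alpha2 = 0)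
  (c c' : nat -> M7 R)
  (Hc : in_L_at_gamma alpha1 alpha2 c) (Hc' : in_L_at_gamma alpha1 alpha2 c') :
  (* at most a simple pole: coefficients of z^-5, ..., z^-2 vanish *)
  (forall k : nat, (k < 4)%N -> trdcoef c c' k = 0) /\
  (* residue = 2 (kappa1 + kappa2)([L, L']) *)
  (exists k1 k2 : R,
     blk22 (commcoef c c' 4) *m alpha1 = k1 *: alpha1 /\
     - (blk22 (commcoef c c' 4))^T *m alpha2 = k2 *: alpha2 /\
     trdcoef c c' 4 = 2 * (k1 + k2)).
Proof.
have o12 : dot alpha1 alpha2 = 0 by apply: dot_of.
have o21 : dot alpha2 alpha1 = 0 by rewrite dotC.
case: Hc => HG [[mu Hc0] [[b01 [b02 [b1 [b2 [hb2 [hb1 Hc1]]]]]]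
  [[a1 [a2 [A [k1 [k2 [ha2 [ha1 [hA1 [hA2 Hc2]]]]]]]]] Hc3]]].
case: (HG 3%N) => p1 [p2 [P [_ Hc3e]]].
case: (HG 4%N) => q1 [q2 [Q [_ Hc4e]]].
case: Hc' => HG' [[mu' Hc0'] [[b01' [b02' [b1' [b2' [hb2' [hb1' Hc1']]]]]]
  [[a1' [a2' [A' [k1' [k2' [ha2' [ha1' [hA1' [hA2' Hc2']]]]]]]]] Hc3']]].
case: (HG' 3%N) => p1' [p2' [P' [_ Hc3e']]].
case: (HG' 4%N) => q1' [q2' [Q' [_ Hc4e']]].
rewrite c0form in Hc0. rewrite c0form in Hc0'.
rewrite Hc3e blk22_G2 in Hc3. rewrite Hc3e' blk22_G2 in Hc3'.
have hP : dot alpha2 (P *m alpha1) = 0 by apply: dot_of3.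
have hP' : dot alpha2 (P' *m alpha1) = 0 by apply: dot_of3.
have hb2a : dot b2 alpha1 = 0 by rewrite dotC; apply: dot_of.
have hb2a' : dot b2' alpha1 = 0 by rewrite dotC; apply: dot_of.
have hb1a : dot alpha2 b1 = 0 by apply: dot_of.
have hb1a' : dot alpha2 b1' = 0 by apply: dot_of.
have hb1b : dot b1 alpha2 = 0 by rewrite dotC.
have hb1b' : dot b1' alpha2 = 0 by rewrite dotC.
have ha2a : dot a2 alpha1 = 0 by rewrite dotC; apply: dot_of.
have ha2a' : dot a2' alpha1 = 0 by rewrite dotC; apply: dot_of.
have ha1a : dot a1 alpha2 = 0 by rewrite dotC; apply: dot_of.
have ha1a' : dot a1' alpha2 = 0 by rewrite dotC; apply: dot_of.
have rA : A *m alpha1 - k1 *: alpha1 = 0 by rewrite hA1 subrr.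
have rA' : A' *m alpha1 - k1' *: alpha1 = 0 by rewrite hA1' subrr.
have sA : - A^T *m alpha2 - k2 *: alpha2 = 0 by rewrite hA2 subrr.
have sA' : - A'^T *m alpha2 - k2' *: alpha2 = 0 by rewrite hA2' subrr.
split.
  move=> k; case: k => [|[|[|[|k]]]] // _.
  - rewrite trd0 Hc0 Hc0' T00 D0 o21; ring.
  - rewrite trd1 Hc0 Hc0' Hc1 Hc1' T00 T00' !D1 o21 hb1a hb1a'; ring.
  - rewrite trd2 Hc1 Hc1' Hc2 Hc0' T11 T00' (D2 _ _ _ _ k1) rA dot0r o12 o21 hb2a hb2a' hb1a hb1a'; ring.
  - rewrite trd3 Hc0 Hc0' Hc2 Hc1' Hc3e Hc3e' T00 T00' hP hP' (T21 _ _ _ _ _ _ k1 k2) rA sA dot0r dot0l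
      ha1a ha2a hb2a' hb1a'; ring.
exists (mu * dot alpha2 (Q' *m alpha1)
   + (-2 * b01 * dot p2' alpha1 + dot b2 (P' *m alpha1) - b02 * dot alpha2 p1')
   + (dot a2' a1 - dot a2 a1')
   - (-2 * b01' * dot p2 alpha1 + dot b2' (P *m alpha1) - b02' * dot alpha2 p1)
   - mu' * dot alpha2 (Q *m alpha1)).
exists (mu * dot alpha2 (Q' *m alpha1)
   + (-2 * b02 * dot alpha2 p1' - dot b1 (P'^T *m alpha2) - b01 * dot p2' alpha1)
   + (dot a2 a1' - dot a2' a1)
   - (-2 * b02' * dot alpha2 p1 - dot b1' (P^T *m alpha2) - b01' * dot p2 alpha1)
   - mu' * dot alpha2 (Q *m alpha1)).
split; [|split].
- rewrite blk22_comm (comm22C _ _ (c 3%N)) (comm22C _ _ (c 4%N)) distr5a.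
  rewrite Hc0 Hc1 Hc2 Hc3e Hc4e Hc0' Hc1' Hc2' Hc3e' Hc4e'.
  apply: etrans; first apply: (sum5_eq
    (L04a _ mu alpha1 alpha2 q1' q2' Q')
    (L13a _ alpha1 alpha2 b01 b02 b1 b2 p1' p2' P')
    (L22a _ alpha1 a1 a2 A k1 a1' a2' A' k1')
    (L13a _ alpha1 alpha2 b01' b02' b1' b2' p1 p2 P)
    (L04a _ mu' alpha1 alpha2 q1 q2 Q)).
  rewrite ?o21 ?o12 ?hP ?hP' ?hb2a ?hb2a' ?ha2a ?ha2a' rA rA'.
  rewrite ?mulr0 ?mul0r ?scale0r ?scaler0 ?mulmx0 ?subr0 ?addr0 comb5.
  congr (_ *: _); ring.
- rewrite blk22_comm (comm22C _ _ (c 3%N)) (comm22C _ _ (c 4%N)) distr5b.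
  rewrite Hc0 Hc1 Hc2 Hc3e Hc4e Hc0' Hc1' Hc2' Hc3e' Hc4e'.
  apply: etrans; first apply: (sum5_eq
    (L04b _ mu alpha1 alpha2 q1' q2' Q')
    (L13b _ alpha1 alpha2 b01 b02 b1 b2 p1' p2' P')
    (L22b _ alpha2 a1 a2 A k2 a1' a2' A' k2')
    (L13b _ alpha1 alpha2 b01' b02' b1' b2' p1 p2 P)
    (L04b _ mu' alpha1 alpha2 q1 q2 Q)).
  rewrite ?o21 ?o12 ?hP ?hP' ?hb1b ?hb1b' ?ha1a ?ha1a' sA sA'.
  rewrite ?mulr0 ?mul0r ?scale0r ?scaler0 ?mulmx0 ?subr0 ?addr0 comb5.
  congr (_ *: _); ring.
- rewrite trd4 Hc0 Hc1 Hc3e Hc4e Hc0' Hc1' Hc3e' Hc4e'.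
  rewrite (mxtrace_mulC (G2mat p1 p2 P)).
  rewrite (T00 _ mu alpha1 alpha2 q1' q2' Q') (T13 _ alpha1 alpha2 b01 b02 b1 b2 p1' p2' P')
    (T13 _ alpha1 alpha2 b01' b02' b1' b2' p1 p2 P) (T00' _ mu' alpha1 alpha2 q1 q2 Q).
  ring.
Qed.
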